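(* Consider the discrete-time control system $x_{k+1}=f(x_k,u_k)$ with reward $r(x,u)=R-x^TQx$ and optimal discounted value $V_\gamma(x)=\sup_{\mathbf u}\sum_{k\ge0}\gamma^k r(\Psi(k,x,\mathbf u(k)),\mathbf u(k))$. Suppose the system is exponentially stabilizable in the following sense: there exist $M>0$ and $\lambda>0$ such that for each $x\in\mathbb R^n$ there is an infinite control sequence $\mathbf u$ with $R-r(\Psi(k,x,\mathbf u(k)),\mathbf u(k))\le M\|x\|^2e^{-\lambda k}$ for all $k\ge0$. Then for every $\gamma\in(0,1)$ and every $x\in\mathbb R^n$, $\frac{R}{1-\gamma}-V_\gamma(x)\le a_V\|x\|^2$ with $a_V=\frac{M}{1-e^{-\lambda}}$.
   Context: $x_k\in\mathbb R^n$, $u_k\in\mathcal U\subset\mathbb R^m$; $\Psi(k,x,\mathbf u(k))$ is the state at time $k$ starting from $x$ under the control sequence $\mathbf u$, and $\mathbf u(k)$ is its $k$-th input. $R>0$ is a constant and $Q$ is positive definite. *)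

(* Defs.v *)
From HB Require Import structures.
From mathcomp Require Import all_boot all_order all_algebra.
From mathcomp Require Import all_classical all_reals all_analysis.
Set Implicit Arguments. Unset Strict Implicit. Unset Printing Implicit Defensive.
Import Order.TTheory GRing.Theory Num.Theory.
Local Open Scope ring_scope.
Local Open Scope classical_set_scope.

Section Defs.
Variables (R : realType) (n m : nat).

Definition qform (Q : 'M[R]_n) (x : 'cV[R]_n) : R := (x^T *m Q *m x) 0 0.

Definition sqnorm (x : 'cV[R]_n) : R := (x^T *m x) 0 0.

Fixpoint Psi (f : 'cV[R]_n -> 'cV[R]_m -> 'cV[R]_n) (k : nat)
    (x : 'cV[R]_n) (u : nat -> 'cV[R]_m) : 'cV[R]_n :=
  match k with
  | 0 => x
  | k'.+1 => f (Psi f k' x u) (u k')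
  end.

Definition reward (Rc : R) (Q : 'M[R]_n) (x : 'cV[R]_n) (v : 'cV[R]_m) : R :=
  Rc - qform Q x.

Definition admissible (U : set 'cV[R]_m) (u : nat -> 'cV[R]_m) : Prop :=
  forall k, U (u k).

Definition disc_return (f : 'cV[R]_n -> 'cV[R]_m -> 'cV[R]_n)
    (Rc : R) (Q : 'M[R]_n) (gamma : R) (x : 'cV[R]_n) (u : nat -> 'cV[R]_m)
    : \bar R :=
  (\sum_(0 <= k <oo) ((gamma ^+ k * reward Rc Q (Psi f k x u) (u k))%:E))%E.

Definition Vgamma (f : 'cV[R]_n -> 'cV[R]_m -> 'cV[R]_n) (U : set 'cV[R]_m)
    (Rc : R) (Q : 'M[R]_n) (gamma : R) (x : 'cV[R]_n) : \bar R :=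
  ereal_sup [set disc_return f Rc Q gamma x u | u in admissible U].

End Defs.

(* Main.v *)
Require Import Defs.
From HB Require Import structures.
From mathcomp Require Import all_boot all_order all_algebra.
From mathcomp Require Import all_classical all_reals all_analysis.
Import Order.TTheory GRing.Theory Num.Theory.
Import numFieldNormedType.Exports.
Local Open Scope ring_scope.
Local Open Scope classical_set_scope.


Lemma qform0 (R : realType) (n : nat) (Q : 'M[R]_n) : qform Q 0 = 0.
Proof. by rewrite /qform mulmx0 mxE. Qed.

Theorem proposition4 (R : realType) (n m : nat)
    (f : 'cV[R]_n -> 'cV[R]_m -> 'cV[R]_n) (U : set 'cV[R]_m)
    (Rc : R) (Q : 'M[R]_n)
    (hRc : 0 < Rc)
    (hQsym : Q^T = Q)
    (hQpd : forall x : 'cV[R]_n, x != 0 -> 0 < qform Q x)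
    (M lam : R) (hM : 0 < M) (hlam : 0 < lam)
    (hstab : forall x : 'cV[R]_n, exists u : nat -> 'cV[R]_m,
        admissible U u /\
        forall k : nat,
          Rc - reward Rc Q (Psi f k x u) (u k)
            <= M * sqnorm x * expR (- (lam * k%:R))) :
  forall (gamma : R), 0 < gamma < 1 -> forall x : 'cV[R]_n,
    ((Rc / (1 - gamma))%:E - Vgamma f U Rc Q gamma x
      <= (M / (1 - expR (- lam)) * sqnorm x)%:E)%E.
Proof.
move=> g /andP[g0 g1] x.
have [u [adm hb]] := hstab x.
set s := sqnorm x.
set q := expR (- lam).
have qf0 : forall y, 0 <= qform Q y.
  move=> y; have [->|/hQpd/ltW //] := eqVneq y 0; by rewrite qform0.
have s0 : 0 <= s.
  have := hb 0%N; rewrite /reward opprB addrC subrK mulr0n mulr0 oppr0 expR0 mulr1.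
  by move=> h; rewrite -(pmulr_rge0 _ hM); exact: le_trans (qf0 _) h.
have q0 : 0 < q by exact: expR_gt0.
have q1 : q < 1 by rewrite expR_lt1 oppr_lt0.
pose c := geometric Rc g.
pose b := fun k => g ^+ k * qform Q (Psi f k x u).
have hbk : forall k, 0 <= b k <= geometric (M * s) q k.
  move=> k; rewrite /b /=; apply/andP; split.
    by rewrite mulr_ge0 // exprn_ge0 // ltW.
  have := hb k; rewrite /reward opprB addrC subrK => h.
  rewrite /q -expRM_natl mulrN [k%:R * _]mulrC.
  apply: le_trans h; rewrite ler_piMl //.
  by rewrite exprn_ile1 // ltW.
have cb : cvgn (series b).
  apply: nondecreasing_is_cvgn.
    apply/nondecreasing_seqP => k; rewrite -subr_ge0 seriesSB.
    by have /andP[] := hbk k.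
  exists (M * s / (1 - q)) => _ [k _ <-].
  apply: le_trans (geometric_le_lim k _ q0 _); last by rewrite ger0_norm ?ltW.
    rewrite /series /=; apply: ler_sum => i _; by have /andP[] := hbk i.
  by rewrite mulr_ge0 // ltW.
have cc : cvgn (series c).
  by apply: is_cvg_geometric_series; rewrite ger0_norm ?ltW.
have Lb : limn (series b) <= M * s / (1 - q).
  apply: limr_le => //; near=> k.
  apply: le_trans (geometric_le_lim k _ q0 _); last by rewrite ger0_norm ?ltW.
    rewrite /series /=; apply: ler_sum => i _; by have /andP[] := hbk i.
  by rewrite mulr_ge0 // ltW.
have Lc : limn (series c) = Rc / (1 - g).
  by apply: cvg_lim => //; apply: cvg_geometric_series; rewrite ger0_norm ?ltW.
have D : disc_return f Rc Q g x u = (Rc / (1 - g) - limn (series b))%:E.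
  rewrite /disc_return -Lc -lim_seriesB // -EFin_lim; last exact: is_cvg_seriesB.
  congr (limn _); apply/funext => N /=.
  rewrite sumEFin /series /=; congr (_%:E); apply: eq_bigr => k _.
  by rewrite /reward /c /b /= mulrBr mulrC.
have VD : (disc_return f Rc Q g x u <= Vgamma f U Rc Q g x)%E.
  by apply: ereal_sup_ubound; exists u.
apply: le_trans (leeB (lexx _) VD) _.
rewrite D -EFinB lee_fin opprB addrC subrK.
by rewrite mulrAC.
Unshelve. all: end_near.
Qed.
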